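(* For every integer $n\ge 2$ and every nonzero real $x$, $$O_{n}'(x)+\frac{n}{x}O_{n}(x)=\sum_{j=0}^{\lfloor (n-2)/2\rfloor}\frac{n-1-2j}{x^{2j+1}}\,O_{n-1-2j}(x),$$ where $O_n'$ denotes the derivative of $O_n$ with respect to $x$.
   Context: For a nonzero real number $x$, the Oresme polynomials $O_n(x)$, $n\ge 0$, are defined by $O_{0}(x)=0$, $O_{1}(x)=\frac{1}{x}$, and $O_{n+1}(x)=O_{n}(x)-\frac{1}{x^{2}}O_{n-1}(x)$ for all $n\ge 1$; each $O_n$ is thus a rational function of $x$ (a polynomial in $1/x$), differentiable on $x\neq 0$. *)

(* Defs.v *)
From Stdlib Require Import Reals Lra Lia.
Open Scope R_scope.

(* Oresme polynomials: O_0 = 0, O_1 = 1/x, O_{n+1} = O_n - (1/x^2) O_{n-1}. *)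
Fixpoint Oresme_pair (n : nat) (x : R) : R * R :=
  match n with
  | O => (0, 1 / x)
  | S m => let (a, b) := Oresme_pair m x in (b, b - (1 / x ^ 2) * a)
  end.

Definition Oresme (n : nat) (x : R) : R := fst (Oresme_pair n x).

(* Main.v *)
Require Import Defs.
From Stdlib Require Import Reals Lra Lia FunctionalExtensionality.
Open Scope R_scope.

Lemma O_rec n x : Oresme (S (S n)) x = Oresme (S n) x - 1 / x ^ 2 * Oresme n x.
Proof.
  unfold Oresme. simpl. destruct (Oresme_pair n x). simpl. reflexivity.
Qed.

Lemma O_0 x : Oresme 0 x = 0. Proof. reflexivity. Qed.
Lemma O_1 x : Oresme 1 x = 1 / x. Proof. reflexivity. Qed.

Fixpoint Dr (x : R) (n : nat) : R :=
  match n with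
  | O => 0
  | S O => - 1 / x ^ 2
  | S (S m as k) => Dr x k + 2 / x ^ 3 * Oresme m x - 1 / x ^ 2 * Dr x m
  end.

Fixpoint Sr (x : R) (n : nat) : R :=
  match n with
  | O => 0
  | S O => 0
  | S (S m as k) => INR k / x * Oresme k x + 1 / x ^ 2 * Sr x m
  end.

Lemma deriv_all x (hx : x <> 0) : forall n,
  derivable_pt_lim (Oresme n) x (Dr x n) /\
  derivable_pt_lim (Oresme (S n)) x (Dr x (S n)).
Proof.
  induction n as [|n [IH1 IH2]].
  - split.
    + replace (Oresme 0) with ((fun _ : R => 0)) by (apply functional_extensionality; reflexivity).
      simpl. apply derivable_pt_lim_const.
    + replace (Oresme 1) with ((fun _ : R => 1) / id)%F by (apply functional_extensionality; reflexivity).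
      replace (Dr x 1) with ((0 * id x - 1 * 1) / (id x)²).
      * apply derivable_pt_lim_div; [apply derivable_pt_lim_const | apply derivable_pt_lim_id | exact hx].
      * unfold id, Rsqr; simpl. field. exact hx.
  - split; [exact IH2|].
    replace (Oresme (S (S n))) with
      (Oresme (S n) - ((fun _ : R => 1) / (fun y => y ^ 2)) * Oresme n)%F
      by (apply functional_extensionality; intro y; rewrite O_rec; reflexivity).
    assert (H2 : x ^ 2 <> 0) by (apply pow_nonzero; exact hx).
    assert (Hd : derivable_pt_lim ((fun _ : R => 1) / (fun y => y ^ 2))%F x
                  ((0 * x ^ 2 - (INR 2 * x ^ Init.Nat.pred 2) * 1) / (x ^ 2)²)).
    { apply derivable_pt_lim_div; [apply derivable_pt_lim_const | apply derivable_pt_lim_pow | exact H2]. }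
    pose proof (derivable_pt_lim_minus _ _ _ _ _ IH2 (derivable_pt_lim_mult _ _ _ _ _ Hd IH1)) as H.
    match goal with |- derivable_pt_lim _ _ ?L => replace L with
      (Dr x (S n) - ((0 * x ^ 2 - INR 2 * x ^ Init.Nat.pred 2 * 1) / (x ^ 2)² * Oresme n x +
        ((fun _ : R => 1) / (fun y => y ^ 2))%F x * Dr x n)) end.
    + exact H.
    + unfold div_fct, mult_fct, Rsqr. simpl Dr. simpl INR. simpl Init.Nat.pred.
      field. exact hx.
Qed.

Lemma G_zero x (hx : x <> 0) : forall n,
  Sr x (S n) - INR n / x * Oresme (S n) x - 2 / x ^ 2 * Sr x n = 0 /\
  Sr x (S (S n)) - INR (S n) / x * Oresme (S (S n)) x - 2 / x ^ 2 * Sr x (S n) = 0.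
Proof.
  induction n as [|n [IH1 IH2]].
  - split.
    + simpl. field. exact hx.
    + simpl Sr. rewrite O_rec, O_1. simpl INR. rewrite O_0. field. exact hx.
  - split; [exact IH2|].
    change (Sr x (S (S (S n)))) with (INR (S (S n)) / x * Oresme (S (S n)) x + 1 / x ^ 2 * Sr x (S n)).
    change (Sr x (S (S n))) with (INR (S n) / x * Oresme (S n) x + 1 / x ^ 2 * Sr x n) in *.
    rewrite !O_rec.
    replace (Sr x (S n)) with (INR n / x * Oresme (S n) x + 2 / x ^ 2 * Sr x n) by lra.
    rewrite !S_INR. field. exact hx.
Qed.

Lemma E_eq x (hx : x <> 0) : forall n,
  Dr x n + INR n / x * Oresme n x = Sr x n /\
  Dr x (S n) + INR (S n) / x * Oresme (S n) x = Sr x (S n).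
Proof.
  induction n as [|n [IH1 IH2]].
  - split.
    + simpl. field. exact hx.
    + simpl. rewrite O_1. field. exact hx.
  - split; [exact IH2|].
    destruct (G_zero x hx n) as [G _].
    change (Dr x (S (S n))) with (Dr x (S n) + 2 / x ^ 3 * Oresme n x - 1 / x ^ 2 * Dr x n).
    change (Sr x (S (S n))) with (INR (S n) / x * Oresme (S n) x + 1 / x ^ 2 * Sr x n).
    rewrite O_rec.
    replace (Dr x (S n)) with (Sr x (S n) - INR (S n) / x * Oresme (S n) x) by lra.
    replace (Dr x n) with (Sr x n - INR n / x * Oresme n x) by lra.
    replace (Sr x (S n)) with (INR n / x * Oresme (S n) x + 2 / x ^ 2 * Sr x n) by lra.
    rewrite !S_INR. field. exact hx.
Qed.

Definition term x n j := INR (n - 1 - 2 * j) / x ^ (2 * j + 1) * Oresme (n - 1 - 2 * j) x.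

Lemma sum_eqS x (hx : x <> 0) : forall k,
  sum_f_R0 (term x (k + 2)) ((k + 2 - 2) / 2) = Sr x (k + 2) /\
  sum_f_R0 (term x (S k + 2)) ((S k + 2 - 2) / 2) = Sr x (S k + 2).
Proof.
  induction k as [|k [IH1 IH2]].
  - split.
    + simpl. unfold term. simpl. field. exact hx.
    + simpl. unfold term. simpl. field. exact hx.
  - split; [exact IH2|].
    replace ((S (S k) + 2 - 2) / 2)%nat with (S ((k + 2 - 2) / 2)).
    2:{ replace (S (S k) + 2 - 2)%nat with (k + 1 * 2)%nat by lia.
        rewrite Nat.div_add by lia. replace (k + 2 - 2)%nat with k by lia. lia. }
    rewrite decomp_sum by lia. rewrite Nat.pred_succ.
    rewrite (sum_eq _ (fun i => term x (k + 2) i * (1 / x ^ 2))).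
    2:{ intros i _. unfold term.
        replace (S (S k) + 2 - 1 - 2 * S i)%nat with (k + 2 - 1 - 2 * i)%nat by lia.
        replace (2 * S i + 1)%nat with ((2 * i + 1) + 2)%nat by lia.
        rewrite pow_add. field; repeat split; try exact hx; apply pow_nonzero; exact hx. }
    rewrite <- scal_sum, IH1.
    replace (S (S k) + 2)%nat with (S (S (k + 2))) by lia.
    change (Sr x (S (S (k + 2)))) with (INR (S (k + 2)) / x * Oresme (S (k + 2)) x + 1 / x ^ 2 * Sr x (k + 2)).
    unfold term. replace (S (S (k + 2)) - 1 - 2 * 0)%nat with (S (k + 2)) by lia.
    simpl (2 * 0 + 1)%nat. field. exact hx.
Qed.

Theorem mainTheorem13 (n : nat) (x : R) (hn : (2 <= n)%nat) (hx : x <> 0) :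
  exists D : R,
    derivable_pt_lim (Oresme n) x D /\
    D + INR n / x * Oresme n x =
      sum_f_R0 (fun j => INR (n - 1 - 2 * j) / x ^ (2 * j + 1)
                          * Oresme (n - 1 - 2 * j) x)
               ((n - 2) / 2).
Proof.
  exists (Dr x n). split.
  - apply (deriv_all x hx n).
  - rewrite (proj1 (E_eq x hx n)).
    change (fun j => INR (n - 1 - 2 * j) / x ^ (2 * j + 1) * Oresme (n - 1 - 2 * j) x)
      with (term x n).
    pose proof (proj1 (sum_eqS x hx (n - 2))) as H.
    replace (n - 2 + 2)%nat with n in H by lia.
    symmetry. exact H.
Qed.
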